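(* For $\alpha\in[-1,1]$ let $\rho(\alpha)=\tfrac12(I+\alpha\sigma_z)=\tfrac12\begin{pmatrix}1+\alpha&0\\0&1-\alpha\end{pmatrix}$. Then for all $\alpha,\beta\in[-1,1]$ and $p\ge1$, $$D^p_{z,p}(\rho(\alpha),\rho(\beta))=2^{p-1}|\alpha-\beta|.$$
   Context: Qubit setting: $\mathcal{H}=\mathbb{C}^2$, $\mathcal{H}^*$ is identified with $\mathbb{C}^2$ via the dual basis, and $A^T$ is the usual matrix transpose; operators on $\mathcal{H}\otimes\mathcal{H}^*$ are $4\times4$ matrices in the basis $e_1\otimes e_1^*,e_1\otimes e_2^*,e_2\otimes e_1^*,e_2\otimes e_2^*$. $\sigma_z=\begin{pmatrix}1&0\\0&-1\end{pmatrix}$. The set of couplings of states $\rho,\omega$ is $\mathcal{C}(\rho,\omega)=\{\Pi\in\mathcal{S}(\mathcal{H}\otimes\mathcal{H}^* ):\mathrm{tr}_{\mathcal{H}^*}[\Pi]=\omega,\ \mathrm{tr}_{\mathcal{H}}[\Pi]=\rho^T\}$. For $p\ge1$, $C_{z,p}=|\sigma_z\otimes I^T-I\otimes\sigma_z^T|^p=\mathrm{diag}(0,2^p,2^p,0)$, and $D_{z,p}(\rho,\omega)=\big(\min_{\Pi\in\mathcal{C}(\rho,\omega)}\mathrm{tr}[\Pi C_{z,p}]\big)^{1/p}$. *)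

(* Defs.v *)
From HB Require Import structures.
From mathcomp Require Import all_boot all_order all_algebra.
From mathcomp Require Import complex.
From mathcomp Require Import boolp classical_sets reals exp.
Set Implicit Arguments. Unset Strict Implicit. Unset Printing Implicit Defensive.
Import Order.TTheory GRing.Theory Num.Theory.
Local Open Scope ring_scope.
Local Open Scope complex_scope.

Section QubitDefs.
Variable R : realType.
Local Notation C := R[i].

Definition adjmx (m n : nat) (A : 'M[C]_(m, n)) : 'M[C]_(n, m) :=
  map_mx Num.conj (A^T).

(* positive semidefinite (complex order: 0 <= z means z real and >= 0) *)
Definition psd (n : nat) (A : 'M[C]_n) : Prop :=
  adjmx A = A /\ forall v : 'cV[C]_n, 0 <= (adjmx v *m A *m v) 0 0.

Definition state (n : nat) (A : 'M[C]_n) : Prop := psd A /\ \tr A = 1.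

(* Index of e_i (x) e_j^* in the basis
   e1(x)e1*, e1(x)e2*, e2(x)e1*, e2(x)e2*  (0-based: 2 i + j). *)
Definition pidx (i j : 'I_2) : 'I_4 := inord (2 * i + j).

Definition kron2 (A B : 'M[C]_2) : 'M[C]_4 :=
  \matrix_(a, b) \sum_(i < 2) \sum_(j < 2) \sum_(i' < 2) \sum_(j' < 2)
     (if (a == pidx i j) && (b == pidx i' j') then A i i' * B j j' else 0).

(* partial trace over H^* : result is an operator on H *)
Definition ptr_Hstar (P : 'M[C]_4) : 'M[C]_2 :=
  \matrix_(i, i') \sum_(j < 2) P (pidx i j) (pidx i' j).

(* partial trace over H : result is an operator on H^* *)
Definition ptr_H (P : 'M[C]_4) : 'M[C]_2 :=
  \matrix_(j, j') \sum_(i < 2) P (pidx i j) (pidx i j').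

Definition coupling (rho omega : 'M[C]_2) (P : 'M[C]_4) : Prop :=
  state P /\ ptr_Hstar P = omega /\ ptr_H P = rho^T.

Definition sigma_z : 'M[C]_2 := \matrix_(i, j) (if i == j then
  (if i == 0 :> 'I_2 then 1 else -1) else 0).

Definition Zdiff : 'M[C]_4 := kron2 sigma_z 1%:M^T - kron2 1%:M sigma_z^T.

(* C_{z,p} = |Zdiff|^p, computed via the functional calculus of the
   diagonal (real) matrix Zdiff: entrywise |d|^p on the diagonal. *)
Definition Czp (p : R) : 'M[C]_4 :=
  \matrix_(a, b) (if a == b then ((`|complex.Re (Zdiff a a)| `^ p) %:C) else 0).

(* D_{z,p}(rho, omega) = (min_{Pi in C(rho,omega)} tr[Pi C_{z,p}])^(1/p);
   the minimum is taken as the infimum of the (real) costs. *)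
Definition Dzp (p : R) (rho omega : 'M[C]_2) : R :=
  (inf [set t : R | exists P, coupling rho omega P /\
                              \tr (P *m Czp p) = t%:C]) `^ (p^-1).

Definition rho_of (alpha : R) : 'M[C]_2 :=
  (2%:R^-1 : C) *: (1%:M + (alpha%:C) *: sigma_z).

End QubitDefs.

(* Main.v *)
Require Import Defs.
From HB Require Import structures.
From mathcomp Require Import all_boot all_order all_algebra.
From mathcomp Require Import complex.
From mathcomp Require Import boolp classical_sets reals exp.
From mathcomp Require Import ring zify lra.
Import Order.TTheory GRing.Theory Num.Theory.
Local Open Scope ring_scope.
Local Open Scope complex_scope.

Lemma pidx_val (i j : 'I_2) : nat_of_ord (pidx i j) = (2 * i + j)%N.
Proof. rewrite /pidx inordK //. case: i => [[|[|i]]] Hi; case: j => [[|[|j]]] Hj //. Qed.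

Lemma eq_pidx (a : 'I_4) i j : (a == pidx i j) = (nat_of_ord a == 2 * i + j)%N.
Proof. by rewrite -val_eqE /= pidx_val. Qed.

Lemma Zdiff_diag (R : realType) (a : 'I_4) : Zdiff R a a =
  (if nat_of_ord a == 1%N then 2 else if nat_of_ord a == 2%N then -2 else 0).
Proof.
rewrite /Zdiff !mxE /sigma_z.
rewrite !big_ord_recr !big_ord0 /= !add0r.
case: a => [[|[|[|[|?]]]] Ha] //=; rewrite !mxE !eq_pidx /=; ring.
Qed.

Lemma sum4 (V : nmodType) (F : 'I_4 -> V) :
  \sum_(i < 4) F i = F (inord 0) + F (inord 1) + F (inord 2) + F (inord 3).
Proof.
rewrite !big_ord_recr big_ord0 /= add0r.
by congr (_ + _ + _ + _); congr F; apply: val_inj; rewrite /= inordK.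
Qed.

Lemma sum2 (V : nmodType) (F : 'I_2 -> V) :
  \sum_(i < 2) F i = F (inord 0) + F (inord 1).
Proof.
rewrite !big_ord_recr big_ord0 /= add0r.
by congr (_ + _); congr F; apply: val_inj; rewrite /= inordK.
Qed.

Lemma pidxE (i j : nat) : (i < 2)%N -> (j < 2)%N ->
  pidx (inord i) (inord j) = inord (2 * i + j).
Proof. move=> Hi Hj; apply: val_inj; rewrite /= pidx_val !inordK //; lia. Qed.

Lemma inord_eq n (a b : nat) : (a < n.+1)%N -> (b < n.+1)%N ->
  ((inord a : 'I_n.+1) == inord b) = (a == b).
Proof. by move=> Ha Hb; rewrite -val_eqE /= !inordK. Qed.

Lemma Czp_inord (R : realType) (p : R) (k l : nat) : p != 0 -> (k < 4)%N -> (l < 4)%N ->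
  Czp p (inord k) (inord l) =
  if k == l then (if (k == 1)%N || (k == 2)%N then (2 `^ p)%:C else 0) else 0.
Proof.
move=> p0 Hk Hl; rewrite /Czp mxE inord_eq //.
case: eqP => // _. rewrite Zdiff_diag inordK //.
case: k Hk {Hl} => [|[|[|[|]]]] //= _; rewrite ?normr0 ?powR0 //=.
- by rewrite ger0_norm // addr_ge0.
- by rewrite normrN ger0_norm // addr_ge0.
Qed.

Lemma trCzp (R : realType) (p : R) (P : 'M[R[i]]_4) : p != 0 ->
  \tr (P *m Czp p) = (2 `^ p)%:C * (P (inord 1) (inord 1) + P (inord 2) (inord 2)).
Proof.
move=> p0.
rewrite /mxtrace sum4 ![(P *m _) _ _]mxE !sum4 !Czp_inord //=.
rewrite !mulr0 !addr0 !add0r; ring.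
Qed.

Lemma rho_inord (R : realType) (a : R) (i j : nat) : (i < 2)%N -> (j < 2)%N ->
  rho_of a (inord i) (inord j) =
  if i == j then (if i == 0%N then ((1 + a) / 2)%:C else ((1 - a) / 2)%:C) else 0.
Proof.
move=> Hi Hj; rewrite /rho_of /sigma_z !mxE inord_eq //.
case: eqP => [_|_]; last by rewrite mulr0 addr0 /= mulr0.
rewrite -val_eqE /= inordK //.
case: i Hi {Hj} => [|[|]] //= _; rewrite !rmorphM !rmorphD /= ?rmorphN /= fmorphV /= rmorph_nat rmorph1 /=; rewrite ?rmorph1; field. all: done.
Qed.

Lemma ptrHs_inord (R : realType) (P : 'M[R[i]]_4) i i' : (i < 2)%N -> (i' < 2)%N ->
  ptr_Hstar P (inord i) (inord i') =
  P (inord (2 * i)) (inord (2 * i')) + P (inord (2 * i + 1)) (inord (2 * i' + 1)).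
Proof. by move=> Hi Hi'; rewrite mxE sum2 !pidxE // !addn0. Qed.

Lemma ptrH_inord (R : realType) (P : 'M[R[i]]_4) j j' : (j < 2)%N -> (j' < 2)%N ->
  ptr_H P (inord j) (inord j') =
  P (inord j) (inord j') + P (inord (2 + j)) (inord (2 + j')).
Proof. by move=> Hj Hj'; rewrite mxE sum2 !pidxE. Qed.

Lemma psd_diag (R : realType) n (A : 'M[R[i]]_n) (k : 'I_n) : psd A -> 0 <= A k k.
Proof.
case=> _ /(_ (delta_mx k 0)).
have -> : adjmx (delta_mx k 0 : 'cV[R[i]]_n) = delta_mx 0 k.
  apply/matrixP => a b; rewrite !mxE.
  rewrite ord1 eqxx /= andbT; case: (b == k); by rewrite /= ?(rmorph1, rmorph0).
by rewrite -rowE -colE !mxE.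
Qed.

Lemma ge0_real (R : realType) (z : R[i]) : 0 <= z -> exists u, z = u%:C /\ 0 <= u.
Proof. case: z => u v; rewrite lecE /= => /andP[/eqP -> h]; by exists u. Qed.

Lemma lower (R : realType) (a b p t : R) (P : 'M[R[i]]_4) : p != 0 ->
  coupling (rho_of a) (rho_of b) P -> \tr (P *m Czp p) = t%:C ->
  2 `^ p * (`|a - b| / 2) <= t.
Proof.
move=> p0 [[HP _] [Hs Ht]]; rewrite trCzp // => Htr.
have [u [Hu u0]] := @ge0_real _ _ (@psd_diag _ _ _ (inord 1) HP).
have [w [Hw w0]] := @ge0_real _ _ (@psd_diag _ _ _ (inord 2) HP).
have E1 := congr1 (fun M : 'M[R[i]]_2 => M (inord 0) (inord 0)) Hs.
have E2 := congr1 (fun M : 'M[R[i]]_2 => M (inord 0) (inord 0)) Ht.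
move: E1 E2 => /=; rewrite ptrHs_inord // ptrH_inord // [(rho_of a)^T _ _]mxE !rho_inord //= Hu Hw.
move=> E1 E2.
have E3 : ((1 + b) / 2 - u)%:C = ((1 + a) / 2 - w)%:C.
  by rewrite !rmorphB /= -E1 -E2; ring.
move: Htr; rewrite Hu Hw -rmorphD -rmorphM => /complexI <-.
move/complexI: E3 => E3.
apply: ler_wpM2l; first exact: powR_ge0.
have -> : `|a - b| / 2 = `|(a - b) / 2|.
  by rewrite normrM [`|2^-1|]ger0_norm // invr_ge0.
rewrite ler_norml; apply/andP; split; lra.
Qed.

Definition Pw (R : realType) (d0 d1 d2 d3 : R) : 'M[R[i]]_4 :=
  \matrix_(x, y) (if x == y then (nth 0 [:: d0; d1; d2; d3] x)%:C else 0).
Arguments Pw {R}.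

Lemma Pw_inord (R : realType) (d0 d1 d2 d3 : R) k l : (k < 4)%N -> (l < 4)%N ->
  Pw d0 d1 d2 d3 (inord k) (inord l) =
  if k == l then (nth 0 [:: d0; d1; d2; d3] k)%:C else 0.
Proof. by move=> Hk Hl; rewrite mxE inord_eq // inordK. Qed.

Lemma witness (R : realType) (a b p d0 d1 d2 d3 : R) : p != 0 ->
  0 <= d0 -> 0 <= d1 -> 0 <= d2 -> 0 <= d3 ->
  d0 + d1 = (1 + b) / 2 -> d2 + d3 = (1 - b) / 2 ->
  d0 + d2 = (1 + a) / 2 -> d1 + d3 = (1 - a) / 2 ->
  coupling (rho_of a) (rho_of b) (Pw d0 d1 d2 d3) /\
  \tr (Pw d0 d1 d2 d3 *m Czp p) = (2 `^ p * (d1 + d2))%:C.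
Proof.
move=> p0 h0 h1 h2 h3 e1 e2 e3 e4.
have dge0 (x : 'I_4) : 0 <= nth 0 [:: d0; d1; d2; d3] x.
  by case: x => [[|[|[|[|?]]]] ?].
split; last by rewrite trCzp // !Pw_inord //= rmorphM rmorphD.
split; [split; [split|] | split].
- apply/matrixP => x y; rewrite !mxE eq_sym.
  case: eqP => [->|_] /=; last by rewrite rmorph0.
  by rewrite geC0_conj // ler0c.
- move=> v; rewrite !mxE; apply: sumr_ge0 => j _; rewrite !mxE (bigD1 j) //= big1.
    rewrite !mxE eqxx addr0 mulrC mulrA; apply: mulr_ge0; last by rewrite ler0c.
    exact: mul_conjC_ge0.
  by move=> i /negbTE nij; rewrite !mxE nij mulr0.
- rewrite /mxtrace sum4 !Pw_inord //= -!rmorphD /=.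
  have -> : d0 + d1 + d2 + d3 = 1 by lra.
  by rewrite rmorph1.
- apply/matrixP => x y; rewrite -[x]inord_val -[y]inord_val ptrHs_inord // rho_inord //.
  case: x y => [[|[|?]] ?] [[|[|?]] ?] //=; rewrite !Pw_inord //= ?addr0 -?rmorphD ?e1 ?e2 //.
- apply/matrixP => x y; rewrite -[x]inord_val -[y]inord_val ptrH_inord // [(rho_of a)^T _ _]mxE rho_inord //.
  case: x y => [[|[|?]] ?] [[|[|?]] ?] //=; rewrite !Pw_inord //= ?addr0 -?rmorphD ?e3 ?e4 //.
Qed.


Theorem proposition3p9 (R : realType) (alpha beta p : R) :
  -1 <= alpha <= 1 -> -1 <= beta <= 1 -> 1 <= p ->
  (Dzp p (rho_of alpha) (rho_of beta)) `^ p = 2 `^ (p - 1) * `|alpha - beta|.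
Proof.
move=> /andP[a1 a2] /andP[b1 b2] p1.
have p0 : p != 0 by apply/eqP => p0; rewrite p0 in p1; lra.
set m := 2 `^ p * (`|alpha - beta| / 2).
set S := ([set t : R | exists P, coupling (rho_of alpha) (rho_of beta) P /\
                              \tr (P *m Czp p) = t%:C])%classic.
have mS : S m.
  have [ab|ba] := lerP beta alpha.
    have [Hc Ht] := @witness R alpha beta p ((1 + beta) / 2) 0 ((alpha - beta) / 2) ((1 - alpha) / 2)
      p0 ltac:(lra) (lexx 0) ltac:(lra) ltac:(lra) ltac:(lra) ltac:(lra) ltac:(lra) ltac:(lra).
    exists (Pw ((1 + beta) / 2) 0 ((alpha - beta) / 2) ((1 - alpha) / 2)); split => //.
    rewrite Ht /m ger0_norm ?subr_ge0 //; congr (_%:C); rewrite add0r; lra.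
  have [Hc Ht] := @witness R alpha beta p ((1 + alpha) / 2) ((beta - alpha) / 2) 0 ((1 - beta) / 2)
    p0 ltac:(lra) ltac:(lra) (lexx 0) ltac:(lra) ltac:(lra) ltac:(lra) ltac:(lra) ltac:(lra).
  exists (Pw ((1 + alpha) / 2) ((beta - alpha) / 2) 0 ((1 - beta) / 2)); split => //.
  rewrite Ht /m ltr0_norm ?subr_lt0 //; congr (_%:C); rewrite addr0; lra.
have lbS : lbound S m by move=> t [P [Hc Ht]]; exact: lower Hc Ht.
have infE : inf S = m.
  apply/eqP; rewrite eq_le; apply/andP; split.
    by apply: ge_inf => //; exists m.
  by apply: lb_le_inf => //; exists m.
have m0 : 0 <= m by rewrite /m mulr_ge0 ?powR_ge0 // divr_ge0.
rewrite /Dzp -/S infE -powRrM mulVf // powRr1 //.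
rewrite /m powRB; last by apply/implyP => _; rewrite pnatr_eq0.
rewrite powRr1 //; lra.
Qed.
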